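(* Let $m\geq 2$ be an integer and let $\delta(m)=\lceil\log_2(m/3)\rceil$. (i) If $y$ and $v$ are finite binary words such that $yvy$ is a factor of $\mathbf t$ and $|y|=m$, then $2^{\delta(m)}$ divides $|yv|$. (ii) There exist finite binary words $y,v$ such that $yvy$ is a factor of $\mathbf t$, $|y|=m$, and $2^{\delta(m)+1}$ does not divide $|yv|$.
   Context: The Thue–Morse word is the infinite binary word $\mathbf t=\mathbf t_1\mathbf t_2\mathbf t_3\cdots$ where $\mathbf t_i\in\{0,1\}$ has the same parity as the number of $1$'s in the binary expansion of $i-1$ (so $\mathbf t=0110100110010110\cdots$). A factor of $\mathbf t$ is a finite word of the form $\mathbf t_\alpha\mathbf t_{\alpha+1}\cdots\mathbf t_\beta$ (or the empty word). $|w|$ denotes the length of a word $w$; $v$ may be empty. *)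

(* Defs.v *)
From mathcomp Require Import all_boot.
Set Implicit Arguments. Unset Strict Implicit. Unset Printing Implicit Defensive.

(* Number of 1's in the binary expansion of n (fuel n suffices since n./2 < n). *)
Fixpoint popcount_aux (fuel n : nat) : nat :=
  match fuel with
  | 0 => 0
  | f.+1 => if n is 0 then 0 else odd n + popcount_aux f n./2
  end.
Definition popcount (n : nat) : nat := popcount_aux n n.

(* 0-indexed Thue-Morse word: tm k = t_{k+1}, i.e. the parity of the
   number of 1's in the binary expansion of k.  (false = 0, true = 1) *)
Definition tm (k : nat) : bool := odd (popcount k).

(* w is a factor of t: w = t_{a+1} ... t_{a+|w|} for some a (empty word included). *)
Definition tm_factor (w : seq bool) : Prop :=
  exists a : nat, w = mkseq (fun k => tm (a + k)) (size w).

(* delta m = ceil(log2(m/3)) for m >= 2, i.e. the least e >= 0 with m <= 3 * 2^e;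
   equivalently the least e with ceil(m/3) <= 2^e. *)
Definition delta (m : nat) : nat := up_log 2 ((m + 2) %/ 3).

(* Main.v *)
Require Import Defs.
From mathcomp Require Import all_boot.
From mathcomp Require Import zify.

Lemma pc_aux_stable f n : n <= f -> popcount_aux f.+1 n = popcount_aux f n.
Proof.
elim: f n => [|f IH] n hn.
  by move: hn; rewrite leqn0 => /eqP ->.
case: n hn => [|n] hn //.
rewrite [LHS]/= [RHS]/=.
congr (_ + _).
apply: IH.
by rewrite leq_uphalf_double -muln2; lia.
Qed.

Lemma pc_aux_ge f g n : n <= f -> f <= g -> popcount_aux g n = popcount_aux f n.
Proof.
move=> hn; elim: g => [|g IH] hg.
  by move: hg; rewrite leqn0 => /eqP ->.
rewrite leq_eqVlt in hg; case/orP: hg => [/eqP <- //|hg].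
rewrite pc_aux_stable ?IH //; lia.
Qed.

Lemma popcount_half n : popcount n = odd n + popcount n./2.
Proof.
case: n => [|n] //.
rewrite /popcount [LHS]/=; congr (_ + _).
apply: pc_aux_ge => //; rewrite -divn2; lia.
Qed.

Lemma tm_half n : tm n = tm n./2 (+) odd n.
Proof.
rewrite /tm popcount_half oddD; by case: (odd n); case: (odd (popcount _)).
Qed.

Lemma tm_2b n (b : bool) : tm (n.*2 + b) = tm n (+) b.
Proof.
by rewrite tm_half addnC half_bit_double oddD odd_double addbF; case: b.
Qed.

Lemma tm0 : tm 0 = false. Proof. by []. Qed.

Lemma tm_pow e n r : r < 2 ^ e -> tm (2 ^ e * n + r) = tm n (+) tm r.
Proof.
elim: e n r => [|e IH] n r hr.
  by move: hr; rewrite expn0 ltnS leqn0 => /eqP ->; rewrite mul1n addn0 tm0 addbF.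
have -> : 2 ^ e.+1 * n + r = (2 ^ e * n + r./2).*2 + odd r.
  have := odd_double_half r; rewrite expnS -mulnA -!muln2; lia.
rewrite tm_2b IH; last by rewrite ltn_half_double -muln2 -expnSr.
by rewrite (tm_half r) addbA.
Qed.

Definition agree i j n := forall r, r < n -> tm (i + r) = tm (j + r).

Lemma tm_even n : tm n.*2 = tm n.
Proof. by have := tm_2b n false; rewrite addn0 addbF. Qed.

Lemma tm_odd n : tm n.*2.+1 = ~~ tm n.
Proof. by have := tm_2b n true; rewrite addn1 addbT. Qed.

Lemma no3 b : tm b = tm b.+1 -> tm b.+1 = tm b.+2 -> False.
Proof.
rewrite -(odd_double_half b); case: (odd b) => /=.
  by rewrite add1n -doubleS !tm_odd tm_even; case: (tm _); case: (tm _).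
by rewrite add0n -doubleS tm_odd !tm_even; case: (tm _); case: (tm _).
Qed.

Lemma base_aux a b : agree a.*2 b.*2.+1 4 -> False.
Proof.
move=> H.
have h0 := H 0 isT. have h1 := H 1 isT. have h2 := H 2 isT. have h3 := H 3 isT.
rewrite !addnS !addn0 -!doubleS !tm_odd !tm_even in h0 h1 h2 h3.
apply: (@no3 b).
  by move: h0 h1 h2 h3; case: (tm a); case: (tm a.+1); case: (tm b); case: (tm b.+1); case: (tm b.+2).
by move: h0 h1 h2 h3; case: (tm a); case: (tm a.+1); case: (tm b); case: (tm b.+1); case: (tm b.+2).
Qed.

Lemma agree_sym i j n : agree i j n -> agree j i n.
Proof. by move=> h r hr; rewrite h. Qed.

Lemma base i j : agree i j 4 -> odd i = odd j.
Proof.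
move=> h.
case Ei: (odd i); case Ej: (odd j) => //; exfalso; move: h.
  rewrite -(odd_double_half i) -(odd_double_half j) Ei Ej add0n add1n => h.
  by apply: (@base_aux j./2 i./2); apply: agree_sym.
rewrite -(odd_double_half i) -(odd_double_half j) Ei Ej add0n add1n => h.
exact: (@base_aux i./2 j./2).
Qed.

Lemma halve i j n : odd i = odd j -> agree i j n ->
  forall r, r.*2 < n -> tm (i./2 + r) = tm (j./2 + r).
Proof.
move=> hp h r hr; have := h _ hr.
have -> : i + r.*2 = (i./2 + r).*2 + odd i.
  have := odd_double_half i; rewrite -!muln2; lia.
have -> : j + r.*2 = (j./2 + r).*2 + odd j.
  have := odd_double_half j; rewrite -!muln2; lia.
by rewrite !tm_2b hp; case: (odd j); case: (tm _); case: (tm _).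
Qed.

Lemma sub_par i j : odd i = odd j -> j - i = (j./2 - i./2).*2.
Proof.
move=> hp; have := odd_double_half i; have := odd_double_half j.
rewrite hp -!muln2; lia.
Qed.

Lemma mainlem k : forall i j n, 3 * 2 ^ k < n -> agree i j n -> 2 ^ k.+1 %| j - i.
Proof.
elim: k => [|k IH] i j n hn h.
  have hp : odd i = odd j by apply: base => r hr; apply: h; apply: leq_trans hn.
  by rewrite (@sub_par _ _ hp) -muln2 dvdn_mull.
have h4 : 3 < n.
  apply: leq_trans hn; rewrite expnS; have : 0 < 2 ^ k by rewrite expn_gt0.
  lia.
have hp : odd i = odd j by apply: base => r hr; apply: h; apply: leq_trans h4.
rewrite (@sub_par _ _ hp) -muln2 expnS mulnC dvdn_pmul2r //.
apply: (IH _ _ (3 * 2 ^ k).+1) => //.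
move=> r hr; apply: (@halve _ _ _ hp h).
move: hn hr; rewrite expnS -muln2; lia.
Qed.

Lemma per e q : q < 3 * 2 ^ e -> tm (3 * 2 ^ e + 7 * 2 ^ e + q) = tm (3 * 2 ^ e + q).
Proof.
move=> hq.
have he : 0 < 2 ^ e by rewrite expn_gt0.
have hd := divn_eq q (2 ^ e).
have hr : q %% 2 ^ e < 2 ^ e by rewrite ltn_mod.
have hd3 : q %/ 2 ^ e < 3 by rewrite ltn_divLR // mulnC.
have -> : 3 * 2 ^ e + 7 * 2 ^ e + q = 2 ^ e * (10 + q %/ 2 ^ e) + q %% 2 ^ e.
  rewrite {1}hd; rewrite mulnDr; lia.
have -> : 3 * 2 ^ e + q = 2 ^ e * (3 + q %/ 2 ^ e) + q %% 2 ^ e.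
  rewrite {1}hd; rewrite mulnDr; lia.
rewrite !tm_pow //; congr (_ (+) _).
by move: hd3; case: (q %/ 2 ^ e) => [|[|[|]]].
Qed.

Theorem proposition1 (m : nat) (hm : 2 <= m) :
  (forall y v : seq bool,
      tm_factor (y ++ v ++ y) -> size y = m ->
      2 ^ delta m %| size (y ++ v)) /\
  (exists y v : seq bool,
      [/\ tm_factor (y ++ v ++ y), size y = m &
          ~~ (2 ^ (delta m).+1 %| size (y ++ v))]).
Proof.
split.
  move=> y v [a ha] hy.
  have hag : agree a (a + size (y ++ v)) m.
    move=> r hr.
    have h1 := congr1 (fun s => nth false s r) ha.
    have h2 := congr1 (fun s => nth false s (size (y ++ v) + r)) ha.
    move: h1 h2 => /=.
    rewrite !nth_mkseq; last (by rewrite !size_cat; lia); last (by rewrite !size_cat; lia).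
    move=> h1 h2.
    rewrite nth_cat hy hr in h1.
    rewrite catA nth_cat ltnNge leq_addr /= addKn in h2.
    by rewrite -addnA -h1 -h2.
  case e: (delta m) => [|k]; first by rewrite dvd1n.
  have hN : 1 < (m + 2) %/ 3.
    rewrite ltnNge; apply/negP => hle.
    move: e; rewrite /delta.
    have : up_log 2 ((m + 2) %/ 3) == 0 by rewrite up_log_eq0 hle orbT.
    by move/eqP ->.
  have hk := up_log_gtn (isT : 1 < 2) hN.
  rewrite -/(delta m) e /= in hk.
  have hk3 : 3 * 2 ^ k < m by lia.
  have := @mainlem _ _ _ _ hk3 hag.
  by rewrite addKn.
pose e := delta m.
have hle : m <= 3 * 2 ^ e.
  have := up_logP ((m + 2) %/ 3) (isT : 1 < 2); rewrite -/(delta m) -/e; lia.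
pose a := 3 * 2 ^ e.
exists (mkseq (fun k => tm (a + k)) m).
exists (mkseq (fun k => tm (a + m + k)) (7 * 2 ^ e - m)).
split; first last.
- rewrite size_cat !size_mkseq.
  have -> : m + (7 * 2 ^ e - m) = 2 ^ e * 7 by lia.
  by rewrite expnSr dvdn_pmul2l // expn_gt0.
- by rewrite size_mkseq.
exists a.
apply: (eq_from_nth (x0 := false)); first by rewrite size_mkseq.
move=> r; rewrite !size_cat !size_mkseq => hr.
rewrite [RHS]nth_mkseq //.
rewrite nth_cat size_mkseq.
case: ltnP => h1; first by rewrite nth_mkseq.
rewrite nth_cat size_mkseq.
case: ltnP => h2; first by rewrite nth_mkseq // -addnA subnKC.
rewrite nth_mkseq; last lia.
have -> : a + r = a + 7 * 2 ^ e + (r - m - (7 * 2 ^ e - m)) by lia.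
by rewrite per //; lia.
Qed.
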